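(* For every integer $r\ge1$, $\big|\mathrm{Var}(\mu^{(r+1)})-\mathrm{Var}(\mu^{(r)})\big|\le b$.
   Context: Fix an integer $b\ge2$. For $n\in\mathbb{N}$ with base-$b$ digits $n_k$, $s(n):=\sum_kn_k$. For $r,n\in\mathbb{N}$, $\Delta^{(r)}(n):=s(n+r)-s(n)$, and $\mu^{(r)}(d):=\lim_{N\to\infty}\frac1N|\{n<N:\Delta^{(r)}(n)=d\}|$ for $d\in\mathbb{Z}$; these limits exist and $\mu^{(r)}$ is a probability measure on $\mathbb{Z}$ with finite moments. $\mathrm{Var}(\mu^{(r)})$ is its variance. *)

(* Defs.v *)
From Stdlib Require Import Reals Lra Lia ZArith Arith List.
From Coquelicot Require Import Coquelicot.
Open Scope R_scope.

Definition digit (b n k : nat) : nat := (n / b ^ k) mod b.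

(* base-b digit sum s(n) = sum_k n_k; digits with k > n vanish (b >= 2),
   so summing over k = 0..n gives all digits. *)
Definition s (b n : nat) : nat :=
  fold_right Nat.add 0%nat (map (digit b n) (seq 0 (S n))).

Definition Delta (b r n : nat) : Z :=
  (Z.of_nat (s b (n + r)) - Z.of_nat (s b n))%Z.

Definition countDelta (b r : nat) (d : Z) (N : nat) : nat :=
  length (filter (fun n => Z.eqb (Delta b r n) d) (seq 0 N)).

Definition mu (b r : nat) (d : Z) : R :=
  real (Lim_seq (fun N => INR (countDelta b r d N) / INR N)).

Definition zsum (f : Z -> R) : R :=
  f 0%Z + Series (fun k => f (Z.of_nat (S k)) + f (- Z.of_nat (S k))%Z).

Definition mean_mu (b r : nat) : R := zsum (fun d => IZR d * mu b r d).

Definition Var_mu (b r : nat) : R :=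
  zsum (fun d => (IZR d - mean_mu b r) ^ 2 * mu b r d).

(* Main.v *)
Require Import Defs.
From Stdlib Require Import Reals Lra Lia ZArith Arith List.
From Coquelicot Require Import Coquelicot.
Open Scope R_scope.

Definition sd (b x m : nat) : nat := fold_right Nat.add 0%nat (map (digit b x) (seq 0 m)).

Lemma sd_front b x m : sd b x (S m) = (x mod b + sd b (x / b) m)%nat.
Proof.
  unfold sd. simpl. f_equal.
  - unfold digit. rewrite Nat.pow_0_r, Nat.div_1_r. reflexivity.
  - rewrite <- seq_shift, map_map.
  f_equal. apply map_ext. intro k. unfold digit. rewrite Nat.pow_succ_r'.
  now rewrite Nat.Div0.div_div.
Qed.

Lemma sd_back b x m : sd b x (S m) = (sd b x m + digit b x m)%nat.
Proof.
  unfold sd. rewrite seq_S, map_app, fold_right_app. simpl.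
  generalize (digit b x m). induction (map (digit b x) (seq 0 m)); intros; simpl; [lia|].
  rewrite IHl. lia.
Qed.

Lemma digit_big b x k : (2 <= b)%nat -> (x <= k)%nat -> digit b x k = 0%nat.
Proof.
  intros hb hk. unfold digit. rewrite Nat.div_small. apply Nat.Div0.mod_0_l.
  pose proof (Nat.pow_gt_lin_r b k ltac:(lia)). lia.
Qed.

Lemma sd_stable b x m : (2 <= b)%nat -> (x <= m)%nat -> sd b x m = sd b x x.
Proof.
  intros hb. induction m; intros h.
  - assert (x = 0%nat) by lia. subst. reflexivity.
  - destruct (Nat.eq_dec x (S m)). { subst. reflexivity. }
    rewrite sd_back, digit_big by lia. rewrite IHm by lia. lia.
Qed.

Lemma s_rec b n : (2 <= b)%nat -> s b n = (n mod b + s b (n / b))%nat.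
Proof.
  intros hb. unfold s. fold (sd b n (S n)). fold (sd b (n/b) (S (n/b))).
  rewrite sd_front. f_equal.
  assert (Hd : (n / b <= n)%nat) by (apply Nat.div_le_upper_bound; nia).
  rewrite (sd_stable b (n/b) n) by lia.
  rewrite (sd_stable b (n/b) (S (n/b))) by lia. reflexivity.
Qed.

Definition cc (b r a : nat) : nat := if Nat.leb b (a + r mod b) then 1%nat else 0%nat.

Lemma Delta_rec (b r n : nat) : (2 <= b)%nat ->
  Defs.Delta b r n = (Z.of_nat (r mod b)%nat - Z.of_nat b * Z.of_nat (cc b r (n mod b)%nat)
                 + Defs.Delta b (r / b + cc b r (n mod b))%nat (n / b)%nat)%Z.
Proof.
  intros hb. unfold Defs.Delta.
  rewrite (s_rec b (n + r)) by lia. rewrite (s_rec b n) by lia.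
  pose proof (Nat.div_mod_eq n b). pose proof (Nat.div_mod_eq r b).
  pose proof (Nat.mod_upper_bound n b ltac:(lia)). pose proof (Nat.mod_upper_bound r b ltac:(lia)).
  unfold cc. destruct (Nat.leb_spec b (n mod b + r mod b)).
  - assert (E1 : ((n + r) / b = n / b + (r / b + 1))%nat).
    { symmetry. apply (Nat.div_unique _ _ _ (n mod b + r mod b - b)); lia. }
    assert (E2 : ((n + r) mod b = n mod b + r mod b - b)%nat).
    { symmetry. apply (Nat.mod_unique _ _ ((n/b) + (r / b + 1)) ); lia. }
    rewrite E1, E2. rewrite Nat2Z.inj_add, Nat2Z.inj_sub by lia. lia.
  - assert (E1 : ((n + r) / b = n / b + (r / b + 0))%nat).
    { symmetry. apply (Nat.div_unique _ _ _ (n mod b + r mod b)); lia. }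
    assert (E2 : ((n + r) mod b = n mod b + r mod b)%nat).
    { symmetry. apply (Nat.mod_unique _ _ ((n/b) + (r / b + 0)) ); lia. }
    rewrite E1, E2. lia.
Qed.


Definition cntP (P : nat -> bool) (N : nat) : nat := length (filter P (seq 0 N)).
Definition freq (P : nat -> bool) (l : R) : Prop :=
  is_lim_seq (fun N => INR (cntP P N) / INR N) l.
Definition ind (x : bool) : R := if x then 1 else 0.

Fixpoint sumR (f : nat -> R) (n : nat) : R :=
  match n with O => 0 | S n => sumR f n + f n end.

Lemma sumR_ext f g n : (forall a, (a < n)%nat -> f a = g a) -> sumR f n = sumR g n.
Proof. induction n; intros H; simpl; [reflexivity|]. rewrite IHn by (intros; apply H; lia). rewrite H by lia. reflexivity. Qed.
Lemma sumR_plus f g n : sumR (fun a => f a + g a) n = sumR f n + sumR g n.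
Proof. induction n; simpl; [lra|]. rewrite IHn. lra. Qed.
Lemma sumR_mult f c n : sumR (fun a => f a * c) n = sumR f n * c.
Proof. induction n; simpl; [lra|]. rewrite IHn. lra. Qed.
Lemma sumR_lim (f : nat -> nat -> R) (l : nat -> R) n :
  (forall a, (a < n)%nat -> is_lim_seq (f a) (l a)) ->
  is_lim_seq (fun N => sumR (fun a => f a N) n) (sumR l n).
Proof.
  induction n; intros H; simpl.
  - apply is_lim_seq_const.
  - apply is_lim_seq_plus'. apply IHn; intros; apply H; lia. apply H; lia.
Qed.

Lemma cntP_S P N : INR (cntP P (S N)) = INR (cntP P N) + ind (P N).
Proof.
  unfold cntP. rewrite seq_S, filter_app, length_app. simpl.
  unfold ind. destruct (P N); simpl; rewrite ?plus_INR; simpl; lra.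
Qed.

Lemma cntP_add P N k : INR (cntP P (N + k)) = INR (cntP P N) + sumR (fun t => ind (P (N + t)%nat)) k.
Proof.
  induction k; simpl. { rewrite Nat.add_0_r. lra. }
  rewrite Nat.add_succ_r, cntP_S, IHk. lra.
Qed.

Lemma sumR_ind_bound (f : nat -> bool) k : 0 <= sumR (fun t => ind (f t)) k <= INR k.
Proof.
  induction k; cbn [sumR]; [simpl; lra|]. rewrite S_INR. assert (0 <= ind (f k) <= 1) by (unfold ind; destruct (f k); lra). lra.
Qed.

Lemma cntP_block (b : nat) (Q : nat -> nat -> bool) M : (1 <= b)%nat ->
  INR (cntP (fun n => Q (n mod b) (n / b))%nat (b * M)) = sumR (fun a => INR (cntP (Q a) M)) b.
Proof.
  intros hb. induction M.
  - rewrite Nat.mul_0_r. unfold cntP at 1. simpl.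
    clear. induction b; simpl; lra.
  - replace (b * S M)%nat with (b * M + b)%nat by lia.
    rewrite cntP_add, IHM.
    rewrite (sumR_ext (fun a => INR (cntP (Q a) (S M))) (fun a => INR (cntP (Q a) M) + ind (Q a M))).
    2:{ intros; apply cntP_S. }
    rewrite sumR_plus. f_equal. apply sumR_ext. intros a Ha.
    f_equal. f_equal.
    + symmetry. apply (Nat.mod_unique _ _ M); lia.
    + symmetry. apply (Nat.div_unique _ _ _ a); lia.
Qed.

Lemma filterlim_div (b : nat) : (1 <= b)%nat -> filterlim (fun N => (N / b)%nat) eventually eventually.
Proof.
  intros hb P [N0 HN0]. exists (b * N0)%nat. intros n Hn. apply HN0.
  apply Nat.div_le_lower_bound; lia.
Qed.

Lemma lim_inv_n : is_lim_seq (fun N => / INR N) 0.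
Proof.
  pose proof (is_lim_seq_inv _ _ is_lim_seq_INR ltac:(discriminate)). simpl in H. exact H.
Qed.

Lemma lim_c_div_n c : is_lim_seq (fun N => c / INR N) 0.
Proof.
  pose proof (is_lim_seq_scal_l _ c _ lim_inv_n). simpl in H. rewrite Rmult_0_r in H. exact H.
Qed.

Lemma lim_div_b (b : nat) : (1 <= b)%nat -> is_lim_seq (fun N => INR (N / b)%nat / INR N) (/ INR b).
Proof.
  intros hb.
  assert (Hb : 0 < INR b) by (apply lt_0_INR; lia).
  apply is_lim_seq_le_le_loc with (u := fun N => / INR b - / INR N) (w := fun N => / INR b).
  - exists 1%nat. intros n Hn.
    assert (Hn' : 0 < INR n) by (apply lt_0_INR; lia).
    pose proof (Nat.div_mod_eq n b). pose proof (Nat.mod_upper_bound n b ltac:(lia)).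
    assert (E : INR n = INR b * INR (n / b) + INR (n mod b)) by (rewrite <- mult_INR, <- plus_INR; f_equal; lia).
    assert (E2 : INR (n mod b) + 1 <= INR b) by (rewrite <- S_INR; apply le_INR; lia).
    assert (E3 : 0 <= INR (n mod b)) by apply pos_INR.
    set (x := INR (n / b)) in *. set (m := INR (n mod b)) in *. set (B := INR b) in *. set (nn := INR n) in *.
    assert (e1 : / B - / nn = (nn - B) * / (B * nn)) by (field; lra).
    assert (e2 : x / nn = (x * B) * / (B * nn)) by (field; lra).
    assert (e3 : / B = nn * / (B * nn)) by (field; lra).
    assert (0 < / (B * nn)) by (apply Rinv_0_lt_compat; nra).
    rewrite e1, e2, e3. split; apply Rmult_le_compat_r; nra.
  - pose proof (is_lim_seq_minus' _ _ _ _ (is_lim_seq_const (/INR b)) lim_inv_n) as H. rewrite Rminus_0_r in H. exact H.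
  - apply is_lim_seq_const.
Qed.

Lemma freq_split (b : nat) (Q : nat -> nat -> bool) (l : nat -> R) : (1 <= b)%nat ->
  (forall a, (a < b)%nat -> freq (Q a) (l a)) ->
  freq (fun n => Q (n mod b) (n / b))%nat (sumR l b / INR b).
Proof.
  intros hb H. unfold freq.
  set (Q' := (fun n => Q (n mod b) (n / b))%nat).
  set (f := fun a K => INR (cntP (Q a) K) / INR K).
  set (A := fun N => sumR (fun a => f a (N / b)%nat) b * (INR (N / b)%nat / INR N)).
  assert (HA : is_lim_seq A (sumR l b / INR b)).
  { apply is_lim_seq_mult'.
    - apply (sumR_lim (fun a N => f a (N / b)%nat)). intros a Ha.
      apply (is_lim_seq_subseq (f a)). apply filterlim_div; lia. apply H; lia.
    - apply lim_div_b; lia. }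
  apply is_lim_seq_le_le_loc with (u := A) (w := fun N => A N + INR b / INR N).
  - exists 1%nat. intros N HN.
    assert (HN' : 0 < INR N) by (apply lt_0_INR; lia).
    assert (Hfa : forall a K, f a K * INR K = INR (cntP (Q a) K)).
    { intros a K. unfold f. destruct K. simpl. unfold cntP. simpl. lra.
      field. apply not_0_INR. lia. }
    assert (EA : A N = INR (cntP Q' (b * (N / b))) / INR N).
    { unfold A. unfold Q'. rewrite cntP_block by lia.
      rewrite (sumR_ext (fun a => INR (cntP (Q a) (N / b)%nat)) (fun a => f a (N / b)%nat * INR (N / b)%nat)) by (intros; symmetry; apply Hfa).
      rewrite sumR_mult. unfold Rdiv. ring. }
    pose proof (Nat.div_mod_eq N b). pose proof (Nat.mod_upper_bound N b ltac:(lia)).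
    assert (EN : N = (b * (N / b) + N mod b)%nat) by lia.
    rewrite EA. replace (cntP Q' N) with (cntP Q' (b*(N/b) + N mod b)%nat) by (f_equal; lia). rewrite cntP_add.
    pose proof (sumR_ind_bound (fun t => Q' (b * (N / b) + t)%nat) (N mod b)).
    assert (INR (N mod b) <= INR b) by (apply le_INR; lia).
    unfold Rdiv. split.
    + apply Rmult_le_compat_r. left; apply Rinv_0_lt_compat; lra. lra.
    + rewrite <- Rmult_plus_distr_r. apply Rmult_le_compat_r. left; apply Rinv_0_lt_compat; lra. lra.
  - exact HA.
  - pose proof (is_lim_seq_plus' _ _ _ _ HA (lim_c_div_n (INR b))) as H'. rewrite Rplus_0_r in H'. exact H'.
Qed.


Definition DP (b r : nat) (d : Z) : nat -> bool := fun n => Z.eqb (Defs.Delta b r n) d.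

Lemma freq_ext P Q l : (forall n, P n = Q n) -> freq P l -> freq Q l.
Proof.
  intros H. unfold freq, cntP. apply is_lim_seq_ext. intro N.
  rewrite (filter_ext P Q H). reflexivity.
Qed.

Lemma freq_false P : (forall n, P n = false) -> freq P 0.
Proof.
  intros H. unfold freq. apply is_lim_seq_ext with (fun _ => 0); [|apply is_lim_seq_const].
  intro N. unfold cntP. rewrite (filter_ext P (fun _ => false) H).
  replace (filter (fun _ => false) (seq 0 N)) with (@nil nat). simpl. unfold Rdiv. ring.
  induction (seq 0 N); simpl; auto.
Qed.

Lemma filter_true {A} (l : list A) : filter (fun _ => true) l = l.
Proof. induction l; simpl; congruence. Qed.

Lemma freq_true P : (forall n, P n = true) -> freq P 1.
Proof.
  intros H. unfold freq.
  apply is_lim_seq_ext_loc with (fun _ => 1); [|apply is_lim_seq_const].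
  exists 1%nat. intros N HN. unfold cntP. rewrite (filter_ext P (fun _ => true) H).
  rewrite filter_true, length_seq. field. apply not_0_INR. lia.
Qed.


Lemma Delta0 b n : Defs.Delta b 0 n = 0%Z.
Proof. unfold Defs.Delta. rewrite Nat.add_0_r. lia. Qed.

Lemma Delta1_le b n : (2 <= b)%nat -> (Defs.Delta b 1 n <= 1)%Z.
Proof.
  intros hb. induction n as [n IH] using lt_wf_ind.
  rewrite Delta_rec by lia.
  replace (1 mod b)%nat with 1%nat by (symmetry; apply Nat.mod_small; lia).
  replace (1 / b)%nat with 0%nat by (symmetry; apply Nat.div_small; lia).
  unfold cc. replace (1 mod b)%nat with 1%nat by (symmetry; apply Nat.mod_small; lia).
  destruct (Nat.leb_spec b (n mod b + 1)).
  - assert (n <> 0%nat). { intro; subst. rewrite Nat.Div0.mod_0_l in H. lia. }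
    assert (n / b < n)%nat by (apply Nat.div_lt; lia).
    specialize (IH _ H1). simpl Nat.add. lia.
  - simpl Nat.add. rewrite Delta0. lia.
Qed.

Lemma DP_rec b r d n : (2 <= b)%nat ->
  DP b r d n = (fun a q => DP b (r / b + cc b r a)%nat
                   (d - Z.of_nat (r mod b)%nat + Z.of_nat b * Z.of_nat (cc b r a))%Z q) (n mod b)%nat (n / b)%nat.
Proof.
  intros hb. unfold DP. rewrite Delta_rec by lia.
  destruct (Z.eqb_spec (Z.of_nat (r mod b) - Z.of_nat b * Z.of_nat (cc b r (n mod b)) +
    Defs.Delta b (r / b + cc b r (n mod b)) (n / b)) d);
  destruct (Z.eqb_spec (Defs.Delta b (r / b + cc b r (n mod b)) (n / b))
    (d - Z.of_nat (r mod b) + Z.of_nat b * Z.of_nat (cc b r (n mod b)))); lia.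
Qed.

Lemma freq_mu b r d : (exists l, freq (DP b r d) l) -> freq (DP b r d) (mu b r d).
Proof.
  intros [l Hl]. unfold mu. change (fun N => INR (countDelta b r d N) / INR N) with (fun N => INR (cntP (DP b r d) N) / INR N).
  unfold freq in Hl. rewrite (is_lim_seq_unique _ _ Hl). simpl. exact Hl.
Qed.

Lemma freq_exists b : (2 <= b)%nat -> forall r d, exists l, freq (DP b r d) l.
Proof.
  intros hb r. induction r as [r IH] using lt_wf_ind.
  destruct (Nat.eq_dec r 0) as [->|Hr0].
  { intros d. destruct (Z.eqb_spec 0 d) as [E0|E0].
    - exists 1. apply freq_true. intro n. unfold DP. rewrite Delta0. apply Z.eqb_eq. lia.
    - exists 0. apply freq_false. intro n. unfold DP. rewrite Delta0. apply Z.eqb_neq. lia. }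
  assert (Hsplit : forall d, (forall a, (a < b)%nat -> exists l, freq (DP b (r / b + cc b r a)%nat
                   (d - Z.of_nat (r mod b)%nat + Z.of_nat b * Z.of_nat (cc b r a))%Z) l) ->
                   exists l, freq (DP b r d) l).
  { intros d H.
    set (Q := fun a q => DP b (r / b + cc b r a)%nat
                   (d - Z.of_nat (r mod b)%nat + Z.of_nat b * Z.of_nat (cc b r a))%Z q).
    exists (sumR (fun a => mu b (r / b + cc b r a)%nat
                   (d - Z.of_nat (r mod b)%nat + Z.of_nat b * Z.of_nat (cc b r a))%Z) b / INR b).
    apply freq_ext with (fun n => Q (n mod b)%nat (n / b)%nat).
    { intro n. symmetry. apply DP_rec. lia. }
    apply freq_split. lia. intros a Ha. apply freq_mu. apply H. exact Ha. }
  destruct (Nat.eq_dec r 1) as [->|Hr1].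
  -
    intros d. remember (Z.to_nat (2 - d)) as k eqn:Hk. revert d Hk.
    induction k as [k IHk] using lt_wf_ind. intros d Hk.
    destruct (Z_le_gt_dec 2 d).
    + exists 0. apply freq_false. intro n. unfold DP. apply Z.eqb_neq.
      pose proof (Delta1_le b n hb). lia.
    + apply Hsplit. intros a Ha. unfold cc.
      replace (1 mod b)%nat with 1%nat by (symmetry; apply Nat.mod_small; lia).
      replace (1 / b)%nat with 0%nat by (symmetry; apply Nat.div_small; lia).
      destruct (Nat.leb b (a + 1)); simpl Nat.add.
      * apply (IHk (Z.to_nat (2 - (d - 1 + Z.of_nat b * 1)))); [|reflexivity]. lia.
      * apply IH. lia.
  - intros d. apply Hsplit. intros a Ha. apply IH.
    pose proof (Nat.div_mod_eq r b). pose proof (Nat.mod_upper_bound r b ltac:(lia)).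
    unfold cc. destruct (Nat.leb_spec b (a + r mod b)); nia.
Qed.

Lemma mu_freq b r d : (2 <= b)%nat -> freq (DP b r d) (mu b r d).
Proof. intros hb. apply freq_mu. apply freq_exists. exact hb. Qed.

Lemma freq_unique P l1 l2 : freq P l1 -> freq P l2 -> l1 = l2.
Proof.
  unfold freq. intros H1 H2. apply is_lim_seq_unique in H1. apply is_lim_seq_unique in H2.
  rewrite H1 in H2. injection H2. auto.
Qed.

Lemma mu_rec b r d : (2 <= b)%nat ->
  mu b r d = sumR (fun a => mu b (r / b + cc b r a)%nat
                   (d - Z.of_nat (r mod b)%nat + Z.of_nat b * Z.of_nat (cc b r a))%Z) b / INR b.
Proof.
  intros hb. apply (freq_unique (DP b r d)). apply mu_freq; lia.
  set (Q := fun a q => DP b (r / b + cc b r a)%nat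
                   (d - Z.of_nat (r mod b)%nat + Z.of_nat b * Z.of_nat (cc b r a))%Z q).
  apply freq_ext with (fun n => Q (n mod b)%nat (n / b)%nat).
  { intro n. symmetry. apply DP_rec. lia. }
  apply freq_split. lia. intros a Ha. apply mu_freq. lia.
Qed.

Lemma sumR_cut (b r0 : nat) x y n :
  sumR (fun a => if Nat.leb b (a + r0) then x else y) n =
  INR (Nat.min n (b - r0)) * y + INR (n - (b - r0)) * x.
Proof.
  induction n; cbn [sumR].
  - simpl. lra.
  - rewrite IHn. destruct (Nat.leb_spec b (n + r0)).
    + replace (Nat.min (S n) (b - r0)) with (Nat.min n (b - r0)) by lia.
      replace (S n - (b - r0))%nat with (S (n - (b - r0))) by lia. rewrite S_INR. lra.
    + replace (Nat.min (S n) (b - r0)) with (S (Nat.min n (b - r0))) by lia.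
      replace (S n - (b - r0))%nat with (n - (b - r0))%nat by lia. rewrite S_INR. lra.
Qed.

Lemma mu_rec2 b r d : (2 <= b)%nat ->
  mu b r d = (INR (b - r mod b) * mu b (r / b) (d - Z.of_nat (r mod b)%nat)%Z
             + INR (r mod b) * mu b (r / b + 1)%nat (d - Z.of_nat (r mod b)%nat + Z.of_nat b)%Z) / INR b.
Proof.
  intros hb. rewrite mu_rec by lia.
  pose proof (Nat.mod_upper_bound r b ltac:(lia)).
  rewrite (sumR_ext _ (fun a => if Nat.leb b (a + r mod b) then
       mu b (r / b + 1)%nat (d - Z.of_nat (r mod b)%nat + Z.of_nat b)%Z
       else mu b (r / b) (d - Z.of_nat (r mod b)%nat)%Z)).
  2:{ intros a Ha. unfold cc. destruct (Nat.leb b (a + r mod b)).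
      - f_equal. f_equal. lia.
      - rewrite Nat.add_0_r. f_equal. lia. }
  rewrite sumR_cut. f_equal.
  replace (Nat.min b (b - r mod b)) with (b - r mod b)%nat by lia.
  replace (b - (b - r mod b))%nat with (r mod b) by lia. reflexivity.
Qed.

Lemma mu_nonneg b r d : (2 <= b)%nat -> 0 <= mu b r d.
Proof.
  intros hb. pose proof (mu_freq b r d hb). unfold freq in H.
  pose proof (is_lim_seq_le (fun _ => 0) (fun N : nat => INR (cntP (DP b r d) N) / INR N) 0 (mu b r d)) as L. simpl in L. apply L; auto.
  - intro n. unfold Rdiv. apply Rmult_le_pos. apply pos_INR. destruct n. simpl. rewrite Rinv_0. lra.
    left. apply Rinv_0_lt_compat. apply lt_0_INR. lia.
  - apply is_lim_seq_const.
Qed.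

Lemma mu0 b d : (2 <= b)%nat -> mu b 0 d = if Z.eqb d 0 then 1 else 0.
Proof.
  intros hb. apply (freq_unique (DP b 0 d)). apply mu_freq; lia.
  destruct (Z.eqb_spec d 0) as [E|E].
  - apply freq_true. intro n. unfold DP. rewrite Delta0. apply Z.eqb_eq. lia.
  - apply freq_false. intro n. unfold DP. rewrite Delta0. apply Z.eqb_neq. lia.
Qed.

Lemma mu1_supp b d : (2 <= b)%nat -> (2 <= d)%Z -> mu b 1 d = 0.
Proof.
  intros hb hd. apply (freq_unique (DP b 1 d)). apply mu_freq; lia.
  apply freq_false. intro n. unfold DP. apply Z.eqb_neq. pose proof (Delta1_le b n hb). lia.
Qed.


Fixpoint symsum (h : Z -> R) (K : nat) : R :=
  match K with
  | O => h 0%Z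
  | S K' => symsum h K' + h (Z.of_nat (S K')) + h (- Z.of_nat (S K'))%Z
  end.
Definition is_zsum (h : Z -> R) (S : R) : Prop := is_lim_seq (symsum h) S.

Lemma symsum_S h K : symsum h (S K) = symsum h K + h (Z.of_nat (S K)) + h (- Z.of_nat (S K))%Z.
Proof. reflexivity. Qed.

Lemma symsum_S_eq h K :
  symsum h (S K) = h 0%Z + sum_n (fun k => h (Z.of_nat (S k)) + h (- Z.of_nat (S k))%Z) K.
Proof.
  induction K.
  - rewrite sum_O. simpl. ring.
  - rewrite sum_Sn. change (symsum h (S (S K))) with (symsum h (S K) + h (Z.of_nat (S (S K))) + h (- Z.of_nat (S (S K)))%Z).
    rewrite IHK. unfold plus. simpl. ring.
Qed.

Lemma zsum_eq h Sv : is_zsum h Sv -> zsum h = Sv.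
Proof.
  intros H. unfold zsum.
  set (g := fun k => h (Z.of_nat (S k)) + h (- Z.of_nat (S k))%Z).
  assert (Hg : is_series g (Sv - h 0%Z)).
  { unfold is_zsum in H. apply is_lim_seq_incr_1 in H.
    assert (H2 := is_lim_seq_minus' _ _ _ _ H (is_lim_seq_const (h 0%Z))).
    apply (is_lim_seq_ext _ (sum_n g)) in H2.
    - exact H2.
    - intro K. rewrite symsum_S_eq. unfold g. ring. }
  rewrite (is_series_unique _ _ Hg). ring.
Qed.

Lemma symsum_ext h h' K : (forall d, h d = h' d) -> symsum h K = symsum h' K.
Proof. intros H. induction K; simpl; rewrite ?IHK, ?H; reflexivity. Qed.

Lemma is_zsum_ext h h' Sv : (forall d, h d = h' d) -> is_zsum h Sv -> is_zsum h' Sv.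
Proof. intros H. unfold is_zsum. apply is_lim_seq_ext. intro; apply symsum_ext; auto. Qed.

Lemma symsum_plus h g K : symsum (fun d => h d + g d) K = symsum h K + symsum g K.
Proof. induction K; simpl; rewrite ?IHK; ring. Qed.

Lemma symsum_scal c h K : symsum (fun d => c * h d) K = c * symsum h K.
Proof. induction K; simpl; rewrite ?IHK; ring. Qed.

Lemma is_zsum_plus h g Sv T : is_zsum h Sv -> is_zsum g T -> is_zsum (fun d => h d + g d) (Sv + T).
Proof.
  intros H1 H2. unfold is_zsum. apply is_lim_seq_ext with (fun K => symsum h K + symsum g K).
  intro; symmetry; apply symsum_plus. apply is_lim_seq_plus'; auto.
Qed.

Lemma is_zsum_scal c h Sv : is_zsum h Sv -> is_zsum (fun d => c * h d) (c * Sv).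
Proof.
  intros H1. unfold is_zsum. apply is_lim_seq_ext with (fun K => c * symsum h K).
  intro; symmetry; apply symsum_scal. apply (is_lim_seq_scal_l _ c Sv). auto.
Qed.

Lemma symsum_shift1 h K :
  symsum (fun d => h (d + 1)%Z) K = symsum h K - h (- Z.of_nat K)%Z + h (Z.of_nat K + 1)%Z.
Proof.
  induction K.
  - simpl. ring.
  - change (symsum (fun d => h (d + 1)%Z) (S K)) with
      (symsum (fun d => h (d + 1)%Z) K + h (Z.of_nat (S K) + 1)%Z + h (- Z.of_nat (S K) + 1)%Z).
    rewrite IHK, symsum_S.
    replace (- Z.of_nat (S K) + 1)%Z with (- Z.of_nat K)%Z by lia.
    replace (Z.of_nat K + 1)%Z with (Z.of_nat (S K)) by lia. ring.
Qed.

Lemma symsum_shiftm1 h K :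
  symsum (fun d => h (d - 1)%Z) K = symsum h K - h (Z.of_nat K)%Z + h (- Z.of_nat K - 1)%Z.
Proof.
  induction K.
  - simpl. ring.
  - change (symsum (fun d => h (d - 1)%Z) (S K)) with
      (symsum (fun d => h (d - 1)%Z) K + h (Z.of_nat (S K) - 1)%Z + h (- Z.of_nat (S K) - 1)%Z).
    rewrite IHK, symsum_S.
    replace (Z.of_nat (S K) - 1)%Z with (Z.of_nat K)%Z by lia.
    replace (- Z.of_nat K - 1)%Z with (- Z.of_nat (S K))%Z by lia. ring.
Qed.

Definition decay (h : Z -> R) : Prop :=
  is_lim_seq (fun K => h (Z.of_nat K)) 0 /\ is_lim_seq (fun K => h (- Z.of_nat K)%Z) 0.

Lemma decay_ext h g : (forall d, h d = g d) -> decay h -> decay g.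
Proof.
  intros E [a b]. split; [eapply is_lim_seq_ext; [|exact a] | eapply is_lim_seq_ext; [|exact b]]; intro; apply E.
Qed.

Lemma decay_shift1 h : decay h -> decay (fun d => h (d + 1)%Z) /\ decay (fun d => h (d - 1)%Z).
Proof.
  intros [H1 H2]. split; split.
  - apply is_lim_seq_incr_1 in H1. eapply is_lim_seq_ext; [|exact H1].
    intro n. cbv beta. f_equal. lia.
  - apply is_lim_seq_incr_1. eapply is_lim_seq_ext; [|exact H2].
    intro n. cbv beta. f_equal. lia.
  - apply is_lim_seq_incr_1. eapply is_lim_seq_ext; [|exact H1].
    intro n. cbv beta. f_equal. lia.
  - apply is_lim_seq_incr_1 in H2. eapply is_lim_seq_ext; [|exact H2].
    intro n. cbv beta. f_equal. lia.
Qed.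

Lemma is_zsum_shift1 h Sv : is_zsum h Sv -> decay h ->
  is_zsum (fun d => h (d + 1)%Z) Sv /\ is_zsum (fun d => h (d - 1)%Z) Sv.
Proof.
  intros H [D1 D2]. split; unfold is_zsum.
  - apply is_lim_seq_ext with (fun K => symsum h K - h (- Z.of_nat K)%Z + h (Z.of_nat K + 1)%Z).
    intro; symmetry; apply symsum_shift1.
    replace Sv with (Sv - 0 + 0) by ring.
    apply is_lim_seq_plus'. apply is_lim_seq_minus'; auto.
    apply is_lim_seq_incr_1 in D1. eapply is_lim_seq_ext; [|exact D1]. intro n. cbv beta. f_equal. lia.
  - apply is_lim_seq_ext with (fun K => symsum h K - h (Z.of_nat K)%Z + h (- Z.of_nat K - 1)%Z).
    intro; symmetry; apply symsum_shiftm1.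
    replace Sv with (Sv - 0 + 0) by ring.
    apply is_lim_seq_plus'. apply is_lim_seq_minus'; auto.
    apply is_lim_seq_incr_1 in D2. eapply is_lim_seq_ext; [|exact D2]. intro n. cbv beta. f_equal. lia.
Qed.

Lemma shift_nat (n : nat) h Sv : is_zsum h Sv -> decay h ->
  (is_zsum (fun d => h (d + Z.of_nat n)%Z) Sv /\ decay (fun d => h (d + Z.of_nat n)%Z)) /\
  (is_zsum (fun d => h (d - Z.of_nat n)%Z) Sv /\ decay (fun d => h (d - Z.of_nat n)%Z)).
Proof.
  intros H D. induction n.
  - split; split.
    + eapply is_zsum_ext; [|exact H]. intro d. cbv beta. f_equal. lia.
    + eapply decay_ext; [|exact D]. intro d. cbv beta. f_equal. lia.
    + eapply is_zsum_ext; [|exact H]. intro d. cbv beta. f_equal. lia.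
    + eapply decay_ext; [|exact D]. intro d. cbv beta. f_equal. lia.
  - destruct IHn as [[H1 D1] [H2 D2]].
    destruct (is_zsum_shift1 _ _ H1 D1) as [H1' _].
    destruct (decay_shift1 _ D1) as [D1' _].
    destruct (is_zsum_shift1 _ _ H2 D2) as [_ H2'].
    destruct (decay_shift1 _ D2) as [_ D2'].
    split; split.
    + eapply is_zsum_ext; [|exact H1']. intro d. cbv beta. f_equal. lia.
    + eapply decay_ext; [|exact D1']. intro d. cbv beta. f_equal. lia.
    + eapply is_zsum_ext; [|exact H2']. intro d. cbv beta. f_equal. lia.
    + eapply decay_ext; [|exact D2']. intro d. cbv beta. f_equal. lia.
Qed.

Lemma shift_Z (c : Z) h Sv : is_zsum h Sv -> decay h ->
  is_zsum (fun d => h (d + c)%Z) Sv.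
Proof.
  intros H D. destruct (Z_le_gt_dec 0 c).
  - destruct (shift_nat (Z.to_nat c) h Sv H D) as [[H1 _] _].
    eapply is_zsum_ext; [|exact H1]. intro d. cbv beta. f_equal. lia.
  - destruct (shift_nat (Z.to_nat (- c)) h Sv H D) as [_ [H1 _]].
    eapply is_zsum_ext; [|exact H1]. intro d. cbv beta. f_equal. lia.
Qed.

Lemma decay_nonneg h Sv : (forall d, 0 <= h d) -> is_zsum h Sv -> decay h.
Proof.
  intros Hp H.
  assert (Hd : is_lim_seq (fun K => h (Z.of_nat (S K)) + h (- Z.of_nat (S K))%Z) 0).
  { assert (H1 := H). unfold is_zsum in H1. apply is_lim_seq_incr_1 in H1.
    pose proof (is_lim_seq_minus' _ _ _ _ H1 H) as H3. rewrite Rminus_eq_0 in H3.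
    eapply is_lim_seq_ext; [|exact H3]. intro K. simpl. ring. }
  split; apply is_lim_seq_incr_1.
  - apply is_lim_seq_le_le with (fun _ => 0) (fun K => h (Z.of_nat (S K)) + h (- Z.of_nat (S K))%Z); auto.
    intro n. pose proof (Hp (Z.of_nat (S n))). pose proof (Hp (- Z.of_nat (S n))%Z). lra.
    apply is_lim_seq_const.
  - apply is_lim_seq_le_le with (fun _ => 0) (fun K => h (Z.of_nat (S K)) + h (- Z.of_nat (S K))%Z); auto.
    intro n. pose proof (Hp (Z.of_nat (S n))). pose proof (Hp (- Z.of_nat (S n))%Z). lra.
    apply is_lim_seq_const.
Qed.

Lemma decay_plus h g : decay h -> decay g -> decay (fun d => h d + g d).
Proof.
  intros [a b] [c d]. split.
  - pose proof (is_lim_seq_plus' _ _ _ _ a c). rewrite Rplus_0_r in H. exact H.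
  - pose proof (is_lim_seq_plus' _ _ _ _ b d). rewrite Rplus_0_r in H. exact H.
Qed.

Lemma decay_scal k h : decay h -> decay (fun d => k * h d).
Proof.
  intros [a b]. split.
  - pose proof (is_lim_seq_scal_l _ k _ a). simpl in H. rewrite Rmult_0_r in H. exact H.
  - pose proof (is_lim_seq_scal_l _ k _ b). simpl in H. rewrite Rmult_0_r in H. exact H.
Qed.


Lemma decay_dom h g : (forall d, Rabs (h d) <= g d) -> decay g -> decay h.
Proof.
  intros Hb [a b]. split.
  - apply is_lim_seq_le_le with (fun K => - g (Z.of_nat K)) (fun K => g (Z.of_nat K)).
    intro n. pose proof (Hb (Z.of_nat n)). match type of H with Rabs ?x <= _ => pose proof (Rle_abs x); pose proof (Rle_abs (- x)); rewrite Rabs_Ropp in *; lra end.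
    pose proof (proj1 (is_lim_seq_opp _ _) a). simpl in H. rewrite Ropp_0 in H. exact H. exact a.
  - apply is_lim_seq_le_le with (fun K => - g (- Z.of_nat K)%Z) (fun K => g (- Z.of_nat K)%Z).
    intro n. pose proof (Hb (- Z.of_nat n)%Z). match type of H with Rabs ?x <= _ => pose proof (Rle_abs x); pose proof (Rle_abs (- x)); rewrite Rabs_Ropp in *; lra end.
    pose proof (proj1 (is_lim_seq_opp _ _) b). simpl in H. rewrite Ropp_0 in H. exact H. exact b.
Qed.


Definition Good (nu : Z -> R) (m M : R) : Prop :=
  (forall d, 0 <= nu d) /\ is_zsum nu 1 /\ is_zsum (fun d => IZR d * nu d) m /\
  is_zsum (fun d => IZR d ^ 2 * nu d) M.

Lemma Good_decay nu m M : Good nu m M ->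
  decay nu /\ decay (fun d => IZR d * nu d) /\ decay (fun d => IZR d ^ 2 * nu d).
Proof.
  intros (Hp & H0 & H1 & H2).
  assert (D0 : decay nu) by (eapply decay_nonneg; eauto).
  assert (D2 : decay (fun d => IZR d ^ 2 * nu d)).
  { eapply decay_nonneg; [|exact H2]. intro d. apply Rmult_le_pos; auto. nra. }
  split; [|split]; auto.
  apply decay_dom with (fun d => nu d + IZR d ^ 2 * nu d).
  - intro d. rewrite Rabs_mult, (Rabs_right (nu d)) by (apply Rle_ge; auto).
    pose proof (Hp d). set (x := IZR d) in *.
    assert (Rabs x <= 1 + x ^ 2).
    { destruct (Rle_dec 0 x). rewrite Rabs_right by lra. nra. rewrite Rabs_left by lra. nra. }
    nra.
  - apply decay_plus; auto.
Qed.

Lemma Good_ext nu nu' m M : (forall d, nu d = nu' d) -> Good nu m M -> Good nu' m M.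
Proof.
  intros E (Hp & H0 & H1 & H2). split; [|split; [|split]].
  - intro d. rewrite <- E. auto.
  - eapply is_zsum_ext; [|exact H0]. auto.
  - eapply is_zsum_ext; [|exact H1]. intro; cbv beta; rewrite E; auto.
  - eapply is_zsum_ext; [|exact H2]. intro; cbv beta; rewrite E; auto.
Qed.

Lemma Good_shift nu m M (c : Z) : Good nu m M ->
  Good (fun d => nu (d - c)%Z) (m + IZR c) (M + 2 * IZR c * m + IZR c ^ 2).
Proof.
  intros G. destruct (Good_decay _ _ _ G) as (D0 & D1 & D2).
  destruct G as (Hp & H0 & H1 & H2). split; [|split; [|split]].
  - intro d. auto.
  - eapply is_zsum_ext; [|apply (shift_Z (- c) _ _ H0 D0)]. intro d. cbv beta. rewrite Z.add_opp_r. reflexivity.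
  - set (h := fun e => IZR e * nu e + IZR c * nu e).
    assert (Hh : is_zsum h (m + IZR c)).
    { replace (m + IZR c) with (m + IZR c * 1) by ring. apply is_zsum_plus; auto. apply is_zsum_scal; auto. }
    assert (Dh : decay h) by (apply decay_plus; auto; apply decay_scal; auto).
    eapply is_zsum_ext; [|apply (shift_Z (- c) _ _ Hh Dh)]. intro d. unfold h.
    replace (d + - c)%Z with (d - c)%Z by lia. rewrite minus_IZR. ring.
  - set (h := fun e => IZR e ^ 2 * nu e + (2 * IZR c) * (IZR e * nu e) + IZR c ^ 2 * nu e).
    assert (Hh : is_zsum h (M + 2 * IZR c * m + IZR c ^ 2)).
    { replace (M + 2 * IZR c * m + IZR c ^ 2) with (M + 2 * IZR c * m + IZR c ^ 2 * 1) by ring.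
      apply is_zsum_plus. apply is_zsum_plus; auto. apply is_zsum_scal; auto. apply is_zsum_scal; auto. }
    assert (Dh : decay h).
    { apply decay_plus. apply decay_plus; auto. apply decay_scal; auto. apply decay_scal; auto. }
    eapply is_zsum_ext; [|apply (shift_Z (- c) _ _ Hh Dh)]. intro d. unfold h.
    replace (d + - c)%Z with (d - c)%Z by lia. rewrite minus_IZR. ring.
Qed.

Lemma Good_mix nu1 nu2 m1 m2 M1 M2 a c : 0 <= a -> 0 <= c -> a + c = 1 ->
  Good nu1 m1 M1 -> Good nu2 m2 M2 ->
  Good (fun d => a * nu1 d + c * nu2 d) (a * m1 + c * m2) (a * M1 + c * M2).
Proof.
  intros ha hc hac (P1 & A0 & A1 & A2) (P2 & B0 & B1 & B2). split; [|split; [|split]].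
  - intro d. pose proof (P1 d). pose proof (P2 d). nra.
  - assert (H := is_zsum_plus _ _ _ _ (is_zsum_scal a _ _ A0) (is_zsum_scal c _ _ B0)).
    replace (a * 1 + c * 1) with 1 in H by lra. exact H.
  - eapply is_zsum_ext; [|apply is_zsum_plus; apply is_zsum_scal; [exact A1|exact B1]].
    intro d. cbv beta. ring.
  - eapply is_zsum_ext; [|apply is_zsum_plus; apply is_zsum_scal; [exact A2|exact B2]].
    intro d. cbv beta. ring.
Qed.

Lemma symsum_point h K : (forall d, d <> 0%Z -> h d = 0) -> symsum h K = h 0%Z.
Proof.
  intros H. induction K; [reflexivity|]. rewrite symsum_S, IHK. rewrite (H (Z.of_nat (S K))), (H (- Z.of_nat (S K))%Z) by lia. ring.
Qed.

Lemma Good_delta0 : Good (fun d => if Z.eqb d 0 then 1 else 0) 0 0.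
Proof.
  split; [|split; [|split]].
  - intro d. destruct (Z.eqb d 0); lra.
  - unfold is_zsum. eapply is_lim_seq_ext; [|apply is_lim_seq_const].
    intro K. rewrite symsum_point. reflexivity. intros d Hd. apply Z.eqb_neq in Hd. rewrite Hd. reflexivity.
  - unfold is_zsum. eapply is_lim_seq_ext; [|apply is_lim_seq_const].
    intro K. rewrite symsum_point. simpl. ring. intros d Hd. apply Z.eqb_neq in Hd. rewrite Hd. ring.
  - unfold is_zsum. eapply is_lim_seq_ext; [|apply is_lim_seq_const].
    intro K. rewrite symsum_point. simpl. ring. intros d Hd. apply Z.eqb_neq in Hd. rewrite Hd. ring.
Qed.

Lemma Good_Var b r M : Good (mu b r) 0 M -> Var_mu b r = M.
Proof.
  intros (Hp & H0 & H1 & H2).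
  unfold Var_mu. assert (E : mean_mu b r = 0) by (apply zsum_eq; auto).
  rewrite E. apply zsum_eq. eapply is_zsum_ext; [|exact H2]. intro d. cbv beta. ring.
Qed.


Lemma shift_le (c : nat) g K : (forall e, 0 <= g e) -> (forall e, (Z.of_nat K < e)%Z -> g e = 0) ->
  symsum (fun d => g (d + Z.of_nat c)%Z) K <= symsum g K.
Proof.
  intros Hp Hs. induction c.
  - right. apply symsum_ext. intro d. f_equal. lia.
  - pose proof (symsum_shift1 (fun d => g (d + Z.of_nat c)%Z) K) as E.
    rewrite (symsum_ext (fun d => g (d + Z.of_nat (S c))%Z) (fun d => (fun d0 => g (d0 + Z.of_nat c)%Z) (d + 1)%Z)).
    2:{ intro d. cbv beta. f_equal. lia. }
    rewrite E. cbv beta. rewrite (Hs (Z.of_nat K + 1 + Z.of_nat c)%Z) by lia.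
    pose proof (Hp (- Z.of_nat K + Z.of_nat c)%Z). lra.
Qed.

Lemma symsum_mono h K : (forall e, 0 <= h e) -> symsum h K <= symsum h (S K).
Proof. intros Hp. rewrite symsum_S. pose proof (Hp (Z.of_nat (S K))). pose proof (Hp (- Z.of_nat (S K))%Z). lra. Qed.

Lemma symsum_ind1 K : (1 <= K)%nat -> symsum (fun d => if Z.eqb d 1 then 1 else 0) K = 1.
Proof.
  intros HK. induction K. lia.
  rewrite symsum_S. destruct K.
  - simpl. lra.
  - rewrite IHK by lia.
    replace (Z.of_nat (S (S K)) =? 1)%Z with false by (symmetry; apply Z.eqb_neq; lia).
    replace (- Z.of_nat (S (S K)) =? 1)%Z with false by (symmetry; apply Z.eqb_neq; lia). lra.
Qed.

Lemma is_zsum_ind1 : is_zsum (fun d => if Z.eqb d 1 then 1 else 0) 1.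
Proof.
  unfold is_zsum. apply is_lim_seq_ext_loc with (fun _ => 1); [|apply is_lim_seq_const].
  exists 1%nat. intros. symmetry. apply symsum_ind1. lia.
Qed.

Lemma bounded_zsum h Mx : (forall e, 0 <= h e) -> (forall K, symsum h K <= Mx) -> exists W, is_zsum h W.
Proof.
  intros Hp Hb. apply (ex_finite_lim_seq_incr (symsum h) Mx); auto.
  intro n. apply symsum_mono; auto.
Qed.

Lemma is_zsum_unique h W1 W2 : is_zsum h W1 -> is_zsum h W2 -> W1 = W2.
Proof.
  unfold is_zsum. intros H1 H2. apply is_lim_seq_unique in H1. apply is_lim_seq_unique in H2.
  rewrite H1 in H2. injection H2; auto.
Qed.

Section Geo.
Variable b : nat.
Hypothesis hb : (2 <= b)%nat.
Variable nu : Z -> R.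
Hypothesis Hp : forall d, 0 <= nu d.
Hypothesis Hs : forall d, (2 <= d)%Z -> nu d = 0.
Hypothesis Hr : forall d, nu d = (INR b - 1) / INR b * (if Z.eqb d 1 then 1 else 0)
                               + / INR b * nu (d + (Z.of_nat b - 1))%Z.

Let B := INR b.
Let c := (Z.of_nat b - 1)%Z.
Lemma B2 : 2 <= B.
Proof. unfold B. apply (le_INR 2 b) in hb. simpl in hb. lra. Qed.
Lemma cR : IZR c = B - 1.
Proof. unfold c, B. rewrite minus_IZR, <- INR_IZR_INZ. reflexivity. Qed.
Lemma cnat : c = Z.of_nat (b - 1).
Proof. unfold c. lia. Qed.

Definition h1 d := (1 - IZR d) * nu d.
Definition h2 d := (1 - IZR d) ^ 2 * nu d.

Lemma le1 d : nu d <> 0 -> IZR d <= 1.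
Proof. intros H. apply IZR_le. destruct (Z_le_gt_dec d 1); auto. exfalso. apply H, Hs. lia. Qed.

Lemma h1_nonneg d : 0 <= h1 d.
Proof.
  unfold h1. destruct (Req_dec (nu d) 0) as [E|E]. rewrite E; lra.
  apply Rmult_le_pos; auto. pose proof (le1 d E). lra.
Qed.
Lemma h2_nonneg d : 0 <= h2 d.
Proof. unfold h2. apply Rmult_le_pos; auto. apply pow2_ge_0. Qed.

Lemma g_nonneg k d : 0 <= (B - IZR d) ^ k * nu d.
Proof.
  destruct (Req_dec (nu d) 0) as [E|E]. rewrite E; lra.
  apply Rmult_le_pos; auto. apply pow_le. pose proof (le1 d E). pose proof B2. lra.
Qed.

Lemma g_supp k K e : (1 <= K)%nat -> (Z.of_nat K < e)%Z -> (B - IZR e) ^ k * nu e = 0.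
Proof. intros. rewrite (Hs e) by lia. ring. Qed.

Lemma h_rec k d : (1 - IZR d) ^ k * nu d =
  (INR b - 1) / INR b * ((1 - IZR d) ^ k * (if Z.eqb d 1 then 1 else 0))
  + / INR b * ((fun e => (B - IZR e) ^ k * nu e) (d + Z.of_nat (b - 1))%Z).
Proof.
  cbv beta. rewrite Hr at 1. rewrite <- cnat. fold c.
  replace (B - IZR (d + c)) with (1 - IZR d) by (rewrite plus_IZR, cR; ring). ring.
Qed.

Lemma sym_rec k K : symsum (fun d => (1 - IZR d) ^ k * nu d) K =
  (B - 1) / B * symsum (fun d => (1 - IZR d) ^ k * (if Z.eqb d 1 then 1 else 0)) K
  + / B * symsum (fun d => (fun e => (B - IZR e) ^ k * nu e) (d + Z.of_nat (b - 1))%Z) K.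
Proof.
  rewrite (symsum_ext _ _ K (h_rec k)). rewrite symsum_plus, !symsum_scal. reflexivity.
Qed.

Lemma bound_k (k : nat) (a0 : R) (Cst : R) :
  (forall K, (1 <= K)%nat -> symsum (fun d => (1 - IZR d) ^ k * (if Z.eqb d 1 then 1 else 0)) K = a0) ->
  (forall K, symsum (fun d => (B - IZR d) ^ k * nu d) K <= symsum (fun d => (1 - IZR d) ^ k * nu d) K + Cst) ->
  (forall e, 0 <= (1 - IZR e) ^ k * nu e) ->
  forall K, symsum (fun d => (1 - IZR d) ^ k * nu d) K <= (a0 * (B - 1) + Cst) / (B - 1).
Proof.
  intros Ha HC Hnn.
  assert (HB := B2).
  assert (Main : forall K, (1 <= K)%nat -> symsum (fun d => (1 - IZR d) ^ k * nu d) K <= (a0 * (B - 1) + Cst) / (B - 1)).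
  { intros K HK.
    pose proof (sym_rec k K) as E. rewrite Ha in E by auto.
    pose proof (shift_le (b - 1) (fun e => (B - IZR e) ^ k * nu e) K (g_nonneg k) (fun e => g_supp k K e HK)).
    pose proof (HC K).
    set (S := symsum (fun d => (1 - IZR d) ^ k * nu d) K) in *.
    set (T := symsum (fun d => (fun e => (B - IZR e) ^ k * nu e) (d + Z.of_nat (b - 1))%Z) K) in *.
    set (U := symsum (fun e => (B - IZR e) ^ k * nu e) K) in *.
    apply (Rmult_le_reg_l (B - 1)). lra.
    replace ((B - 1) * ((a0 * (B - 1) + Cst) / (B - 1))) with (a0 * (B - 1) + Cst) by (field; lra).
    assert (E' : B * S = (B - 1) * a0 + T) by (rewrite E; field; lra).
    nra. }
  intros K. destruct K. apply Rle_trans with (symsum (fun d => (1 - IZR d) ^ k * nu d) 1).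
  apply symsum_mono; auto. apply Main; lia. apply Main; lia.
Qed.

Definition hk (k : nat) := fun d => (1 - IZR d) ^ k * nu d.
Definition gk (k : nat) := fun e => (B - IZR e) ^ k * nu e.

Lemma hk_nonneg k e : (k <= 2)%nat -> 0 <= hk k e.
Proof.
  intros Hk. unfold hk. destruct k as [|[|[|]]]; try lia.
  - simpl. rewrite Rmult_1_l. auto.
  - pose proof (h1_nonneg e). unfold h1 in H. simpl. rewrite Rmult_1_r. exact H.
  - apply Rmult_le_pos; auto. apply pow2_ge_0.
Qed.

Lemma symsum_zero K : symsum (fun _ => 0) K = 0.
Proof. induction K; simpl; [reflexivity|]. rewrite IHK. ring. Qed.

Lemma iota_k_pos k K : (1 <= k)%nat ->
  symsum (fun d => (1 - IZR d) ^ k * (if Z.eqb d 1 then 1 else 0)) K = 0.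
Proof.
  intros Hk. rewrite (symsum_ext _ (fun _ => 0)). apply symsum_zero.
  intro d. destruct (Z.eqb_spec d 1). subst. simpl. destruct k. lia. simpl. ring. ring.
Qed.

Lemma iota_0 K : (1 <= K)%nat ->
  symsum (fun d => (1 - IZR d) ^ 0 * (if Z.eqb d 1 then 1 else 0)) K = 1.
Proof.
  intros HK. rewrite (symsum_ext _ (fun d => if Z.eqb d 1 then 1 else 0)). apply symsum_ind1; auto.
  intro d. simpl. ring.
Qed.

Lemma geo_good : Good nu 0 B.
Proof.
  assert (HB := B2).
  assert (Bd0 : forall K, symsum (hk 0) K <= 1).
  { intro K. pose proof (bound_k 0 1 0 iota_0) as Hb.
    assert (Ee : (1 * (B - 1) + 0) / (B - 1) = 1) by (field; lra). rewrite Ee in Hb.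
    apply Hb. intro K0. right. rewrite Rplus_0_r. apply symsum_ext. intro d. simpl. reflexivity.
    intro; apply (hk_nonneg 0); lia. }
  assert (Bd1 : forall K, symsum (hk 1) K <= 1).
  { intro K. assert (Ee : (0 * (B - 1) + (B - 1)) / (B - 1) = 1) by (field; lra). rewrite <- Ee. apply bound_k. intros; apply iota_k_pos; lia.
    intro K0. rewrite (symsum_ext _ (fun d => hk 1 d + (B - 1) * hk 0 d)).
    rewrite symsum_plus, symsum_scal. pose proof (Bd0 K0). unfold hk in *. nra.
    intro d. unfold hk. simpl. ring.
    intro; apply (hk_nonneg 1); lia. }
  assert (Bd2 : forall K, symsum (hk 2) K <= (0 * (B - 1) + (2 * (B - 1) * 1 + (B - 1) ^ 2)) / (B - 1)).
  { intro K. apply bound_k. intros; apply iota_k_pos; lia.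
    intro K0. rewrite (symsum_ext _ (fun d => hk 2 d + ((2 * (B - 1)) * hk 1 d + (B - 1) ^ 2 * hk 0 d))).
    rewrite !symsum_plus, !symsum_scal. pose proof (Bd0 K0). pose proof (Bd1 K0). unfold hk in *.
    assert (0 <= B - 1) by lra. assert (0 <= (B-1)^2) by nra. nra.
    intro d. unfold hk. simpl. ring.
    intro; apply (hk_nonneg 2); lia. }
  destruct (bounded_zsum (hk 0) _ (fun e => hk_nonneg 0 e ltac:(lia)) Bd0) as [W0 HW0].
  destruct (bounded_zsum (hk 1) _ (fun e => hk_nonneg 1 e ltac:(lia)) Bd1) as [W1 HW1].
  destruct (bounded_zsum (hk 2) _ (fun e => hk_nonneg 2 e ltac:(lia)) Bd2) as [W2 HW2].
  assert (D0 := decay_nonneg _ _ (fun e => hk_nonneg 0 e ltac:(lia)) HW0).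
  assert (D1 := decay_nonneg _ _ (fun e => hk_nonneg 1 e ltac:(lia)) HW1).
  assert (D2 := decay_nonneg _ _ (fun e => hk_nonneg 2 e ltac:(lia)) HW2).
  assert (G0 : is_zsum (gk 0) W0).
  { eapply is_zsum_ext; [|exact HW0]. intro d. unfold gk, hk. simpl. ring. }
  assert (DG0 : decay (gk 0)).
  { eapply decay_ext; [|exact D0]. intro d. unfold gk, hk. simpl. ring. }
  assert (G1 : is_zsum (gk 1) (W1 + (B - 1) * W0)).
  { eapply is_zsum_ext; [|apply is_zsum_plus; [exact HW1|apply is_zsum_scal; exact HW0]].
    intro d. unfold gk, hk. simpl. ring. }
  assert (DG1 : decay (gk 1)).
  { eapply decay_ext; [|apply decay_plus; [exact D1|apply (decay_scal (B - 1)); exact D0]].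
    intro d. unfold gk, hk. simpl. ring. }
  assert (G2 : is_zsum (gk 2) (W2 + (2 * (B - 1) * W1 + (B - 1) ^ 2 * W0))).
  { eapply is_zsum_ext; [|apply is_zsum_plus; [exact HW2|apply is_zsum_plus; apply is_zsum_scal; [exact HW1|exact HW0]]].
    intro d. unfold gk, hk. simpl. ring. }
  assert (DG2 : decay (gk 2)).
  { eapply decay_ext; [|apply decay_plus; [exact D2|apply decay_plus; [apply (decay_scal (2 * (B - 1))); exact D1|apply (decay_scal ((B - 1) ^ 2)); exact D0]]].
    intro d. unfold gk, hk. simpl. ring. }
  assert (Lim : forall k (a0 G : R), is_lim_seq (symsum (fun d => (1 - IZR d) ^ k * (if Z.eqb d 1 then 1 else 0))) a0 ->
            is_zsum (gk k) G -> decay (gk k) -> is_zsum (hk k) ((B - 1) / B * a0 + / B * G)).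
  { intros k a0 G Ha HG DG. unfold is_zsum.
    apply is_lim_seq_ext with (fun K => (B - 1) / B * symsum (fun d => (1 - IZR d) ^ k * (if Z.eqb d 1 then 1 else 0)) K
       + / B * symsum (fun d => (fun e => (B - IZR e) ^ k * nu e) (d + Z.of_nat (b - 1))%Z) K).
    { intro K. unfold hk. symmetry. apply sym_rec. }
    apply is_lim_seq_plus'. apply (is_lim_seq_scal_l _ _ a0). exact Ha.
    apply (is_lim_seq_scal_l _ _ G). apply (shift_Z _ (gk k) G HG DG). }
  assert (I0 : is_lim_seq (symsum (fun d => (1 - IZR d) ^ 0 * (if Z.eqb d 1 then 1 else 0))) 1).
  { apply is_lim_seq_ext_loc with (fun _ => 1); [|apply is_lim_seq_const].
    exists 1%nat. intros. symmetry. apply iota_0. lia. }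
  assert (I1 : forall k, (1 <= k)%nat -> is_lim_seq (symsum (fun d => (1 - IZR d) ^ k * (if Z.eqb d 1 then 1 else 0))) 0).
  { intros k Hk. apply is_lim_seq_ext with (fun _ => 0); [|apply is_lim_seq_const].
    intro. symmetry. apply iota_k_pos. auto. }
  pose proof (is_zsum_unique _ _ _ HW0 (Lim 0%nat _ _ I0 G0 DG0)) as E0.
  pose proof (is_zsum_unique _ _ _ HW1 (Lim 1%nat _ _ (I1 1%nat ltac:(lia)) G1 DG1)) as E1.
  pose proof (is_zsum_unique _ _ _ HW2 (Lim 2%nat _ _ (I1 2%nat ltac:(lia)) G2 DG2)) as E2.
  assert (V0 : W0 = 1).
  { apply (Rmult_eq_reg_l B); [|lra]. rewrite E0 at 1. field_simplify; [|lra].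
    assert (B * W0 = (B - 1) + W0) by (rewrite E0 at 1; field; lra). nra. }
  assert (V1 : W1 = 1).
  { assert (B * W1 = W1 + (B - 1) * W0) by (rewrite E1 at 1; field; lra). rewrite V0 in H.
    apply (Rmult_eq_reg_l (B - 1)); [|lra]. lra. }
  assert (V2 : W2 = B + 1).
  { assert (B * W2 = W2 + (2 * (B - 1) * W1 + (B - 1) ^ 2 * W0)) by (rewrite E2 at 1; field; lra).
    rewrite V0, V1 in H. apply (Rmult_eq_reg_l (B - 1)); [|lra]. nra. }
  split; [|split; [|split]].
  - exact Hp.
  - eapply is_zsum_ext; [|rewrite <- V0; exact HW0]. intro d. unfold hk. simpl. ring.
  - replace 0 with (W0 + -1 * W1) by lra.
    eapply is_zsum_ext; [|apply is_zsum_plus; [exact HW0|apply is_zsum_scal; exact HW1]].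
    intro d. unfold hk. simpl. ring.
  - replace B with (W2 + (-2 * W1 + W0)) by lra.
    eapply is_zsum_ext; [|apply is_zsum_plus; [exact HW2|apply is_zsum_plus; [apply is_zsum_scal; exact HW1|exact HW0]]].
    intro d. unfold hk. simpl. ring.
Qed.
End Geo.


Lemma Good_mu1 b : (2 <= b)%nat -> Good (mu b 1) 0 (INR b).
Proof.
  intros hb. apply geo_good; auto.
  - intro d. apply mu_nonneg. auto.
  - intros d Hd. apply mu1_supp; auto.
  - intro d. rewrite mu_rec2 at 1 by auto.
    replace (1 mod b)%nat with 1%nat by (symmetry; apply Nat.mod_small; lia).
    replace (1 / b)%nat with 0%nat by (symmetry; apply Nat.div_small; lia).
    rewrite mu0 by auto. rewrite minus_INR by lia. simpl (INR 1). simpl (0 + 1)%nat.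
    replace (d - Z.of_nat 1 =? 0)%Z with (d =? 1)%Z.
    2:{ destruct (Z.eqb_spec d 1); destruct (Z.eqb_spec (d - Z.of_nat 1) 0); auto; lia. }
    replace (d - Z.of_nat 1 + Z.of_nat b)%Z with (d + (Z.of_nat b - 1))%Z by lia.
    field. apply not_0_INR. lia.
Qed.

Lemma Good_m_eq nu m m' M M' : m = m' -> M = M' -> Good nu m M -> Good nu m' M'.
Proof. intros -> ->. auto. Qed.

Lemma Good_mu_rec b r V1 V2 : (2 <= b)%nat ->
  Good (mu b (r / b)) 0 V1 -> Good (mu b (r / b + 1)%nat) 0 V2 ->
  Good (mu b r) 0 ((INR (b - r mod b) * (V1 + INR (r mod b) ^ 2)
                   + INR (r mod b) * (V2 + (INR (r mod b) - INR b) ^ 2)) / INR b).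
Proof.
  intros hb G1 G2.
  pose proof (Nat.mod_upper_bound r b ltac:(lia)) as Ht.
  set (t := (r mod b)%nat) in *. set (q := (r / b)%nat) in *.
  assert (HB : 0 < INR b) by (apply lt_0_INR; lia).
  pose proof (Good_shift _ _ _ (Z.of_nat t) G1) as S1.
  pose proof (Good_shift _ _ _ (Z.of_nat t - Z.of_nat b)%Z G2) as S2.
  rewrite <- INR_IZR_INZ in S1. rewrite minus_IZR, <- !INR_IZR_INZ in S2.
  assert (Ha : 0 <= INR (b - t) / INR b) by (apply Rdiv_le_0_compat; [apply pos_INR|lra]).
  assert (Hc : 0 <= INR t / INR b) by (apply Rdiv_le_0_compat; [apply pos_INR|lra]).
  assert (Hac : INR (b - t) / INR b + INR t / INR b = 1) by (rewrite minus_INR by lia; field; lra).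
  pose proof (Good_mix _ _ _ _ _ _ _ _ Ha Hc Hac S1 S2) as G.
  apply (Good_ext _ (mu b r)) in G.
  2:{ intro d. symmetry. rewrite mu_rec2 by lia. fold t q.
      replace (d - Z.of_nat t + Z.of_nat b)%Z with (d - (Z.of_nat t - Z.of_nat b))%Z by lia.
      field. lra. }
  eapply Good_m_eq; [| |exact G].
  - rewrite minus_INR by lia. field. lra.
  - field. lra.
Qed.

Lemma Good_mu b : (2 <= b)%nat -> forall r, Good (mu b r) 0 (Var_mu b r).
Proof.
  intros hb r. induction r as [r IH] using lt_wf_ind.
  destruct (Nat.eq_dec r 0) as [->|H0].
  { assert (G : Good (mu b 0) 0 0).
    { eapply Good_ext; [|exact Good_delta0]. intro d. rewrite mu0 by auto. reflexivity. }
    rewrite (Good_Var _ _ _ G). exact G. }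
  destruct (Nat.eq_dec r 1) as [->|H1].
  { pose proof (Good_mu1 b hb) as G. rewrite (Good_Var _ _ _ G). exact G. }
  assert (Hq : (r / b < r)%nat) by (apply Nat.div_lt; lia).
  destruct (Nat.eq_dec (r mod b) 0) as [Et|Et].
  { pose proof (IH _ Hq) as G.
    apply (Good_ext _ (mu b r)) in G.
    2:{ intro d. rewrite (mu_rec2 b r d hb). rewrite Et. simpl (INR 0).
        rewrite Nat.sub_0_r, Z.sub_0_r. field. apply not_0_INR. lia. }
    rewrite (Good_Var _ _ _ G). exact G. }
  assert (Hq1 : (r / b + 1 < r)%nat).
  { pose proof (Nat.div_mod_eq r b). pose proof (Nat.mod_upper_bound r b ltac:(lia)).
    destruct (Nat.eq_dec (r / b) 0); nia. }
  pose proof (Good_mu_rec b r _ _ hb (IH _ Hq) (IH _ Hq1)) as G.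
  rewrite (Good_Var _ _ _ G). exact G.
Qed.

Lemma V_rec b r : (2 <= b)%nat ->
  Var_mu b r = (INR (b - r mod b) * (Var_mu b (r / b) + INR (r mod b) ^ 2)
                   + INR (r mod b) * (Var_mu b (r / b + 1)%nat + (INR (r mod b) - INR b) ^ 2)) / INR b.
Proof.
  intros hb. apply Good_Var. apply Good_mu_rec; auto; apply Good_mu; auto.
Qed.

Lemma V0 b : (2 <= b)%nat -> Var_mu b 0 = 0.
Proof.
  intros hb. apply Good_Var. eapply Good_ext; [|exact Good_delta0]. intro d. rewrite mu0 by auto. reflexivity.
Qed.

Lemma V1 b : (2 <= b)%nat -> Var_mu b 1 = INR b.
Proof. intros hb. apply Good_Var. apply Good_mu1. auto. Qed.

Theorem mainTheorem14 (b r : nat) (hb : (2 <= b)%nat) (hr : (1 <= r)%nat) :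
  Rabs (Var_mu b (r + 1) - Var_mu b r) <= INR b.
Proof.
  clear hr. assert (HB : 2 <= INR b) by (apply (le_INR 2 b) in hb; simpl in hb; lra).
  induction r as [r IH] using lt_wf_ind.
  destruct (Nat.eq_dec r 0) as [->|H0].
  { simpl. rewrite V0, V1 by auto. rewrite Rminus_0_r, Rabs_right; lra. }
  pose proof (Nat.div_mod_eq r b) as Edm. pose proof (Nat.mod_upper_bound r b ltac:(lia)) as Ht.
  assert (Hq : (r / b < r)%nat) by (apply Nat.div_lt; lia).
  specialize (IH _ Hq).
  set (q := (r / b)%nat) in *. set (t := (r mod b)%nat) in *.
  rewrite (V_rec b r hb), (V_rec b (r + 1) hb). fold q t.
  assert (Tle : INR t + 1 <= INR b) by (rewrite <- S_INR; apply le_INR; lia).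
  assert (T0 : 0 <= INR t) by apply pos_INR.
  destruct (Nat.eq_dec (t + 1) b) as [Et|Et].
  - replace ((r + 1) mod b)%nat with 0%nat by (apply (Nat.mod_unique _ _ (q + 1)); lia).
    replace ((r + 1) / b)%nat with (q + 1)%nat by (apply (Nat.div_unique _ _ _ 0); lia).
    rewrite Nat.sub_0_r. rewrite minus_INR by lia. simpl (INR 0).
    assert (ET : INR t = INR b - 1) by (rewrite <- Et, plus_INR; simpl; ring).
    rewrite ET.
    set (x := Var_mu b (q + 1)) in *. set (y := Var_mu b q) in *.
    apply Rabs_le.
    assert (E : (INR b * (x + 0 ^ 2) + 0 * (Var_mu b (q + 1 + 1) + (0 - INR b) ^ 2)) / INR b -
      ((INR b - (INR b - 1)) * (y + (INR b - 1) ^ 2) + (INR b - 1) * (x + (INR b - 1 - INR b) ^ 2)) / INR b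
      = (x - y) / INR b - (INR b - 1)) by (field; lra).
    rewrite E. apply Rabs_le_between' in IH. clear E.
    assert (- 1 <= (x - y) / INR b <= 1).
    { split; [apply (Rmult_le_reg_l (INR b)); [lra|] | apply (Rmult_le_reg_l (INR b)); [lra|]];
      field_simplify; lra. }
    lra.
  - replace ((r + 1) mod b)%nat with (t + 1)%nat by (apply (Nat.mod_unique _ _ q); lia).
    replace ((r + 1) / b)%nat with q by (apply (Nat.div_unique _ _ _ (t + 1)); lia).
    rewrite !minus_INR by lia. rewrite plus_INR. simpl (INR 1).
    assert (Tle2 : INR t + 2 <= INR b).
    { replace 2 with (INR 2) by (simpl; lra). rewrite <- plus_INR. apply le_INR. lia. }
    set (x := Var_mu b (q + 1)) in *. set (y := Var_mu b q) in *.
    assert (E : ((INR b - (INR t + 1)) * (y + (INR t + 1) ^ 2) + (INR t + 1) * (x + (INR t + 1 - INR b) ^ 2)) / INR b -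
      ((INR b - INR t) * (y + INR t ^ 2) + INR t * (x + (INR t - INR b) ^ 2)) / INR b
      = (x - y) / INR b + (INR b - 2 * INR t - 1)) by (field; lra).
    rewrite E. apply Rabs_le. apply Rabs_le_between' in IH. clear E.
    assert (- 1 <= (x - y) / INR b <= 1).
    { split; [apply (Rmult_le_reg_l (INR b)); [lra|] | apply (Rmult_le_reg_l (INR b)); [lra|]];
      field_simplify; lra. }
    lra.
Qed.
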